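(* Let $T$ (failure time) and $C$ (censoring time) be random times with true CDFs $F^\star$ and $G^\star$, possibly conditional on features $X$, satisfying random censoring $T \perp C \mid X$, and observed only through $(X, U, \Delta)$ with $U=\min(T,C)$ and $\Delta=\mathbf{1}\{T\le C\}$. Let $\{F_{\theta_T}:\theta_T\in\Theta_T\}$ and $\{G_{\theta_C}:\theta_C\in\Theta_C\}$ be differentiable parametric model families for the failure and censoring distributions, and assume there exist $\theta_T^\star\in\Theta_T$ and $\theta_C^\star\in\Theta_C$ with $F^\star=F_{\theta_T^\star}$ and $G^\star=G_{\theta_C^\star}$. Let $L$ be a proper loss, and let $L_I$ be its inverse-probability-of-censoring-weighted (IPCW) form, i.e. a functional computed from the observed data $(X,U,\Delta)$ such that $L_I(F_{\theta_T};G^\star)=L(F_{\theta_T})$ and $L_I(G_{\theta_C};F^\star)=L(G_{\theta_C})$ for all $\theta_T,\theta_C$. Define the two player losses $$\ell_F(\theta)=L_I(F_{\theta_T};G_{\theta_C}),\qquad \ell_G(\theta)=L_I(G_{\theta_C};F_{\theta_T}),\qquad \theta=(\theta_T,\theta_C),$$ where the failure player controls $\theta_T$ and minimizes $\ell_F$, and the censor player controls $\theta_C$ and minimizes $\ell_G$. Assume the losses are only computed at times for which the positivity conditions hold. Then $(\theta_T^\star,\theta_C^\star)$ is a stationary point of this game, i.e. $\nabla_{\theta_T}\ell_F(\theta_T^\star,\theta_C^\star)=0$ and $\nabla_{\theta_C}\ell_G(\theta_T^\star,\theta_C^\star)=0$.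
   Context: A loss $L$ on distributions is proper if it is minimized at the true data-generating distribution. Notation: $\overline{F}=1-F$, $\overline{G}=1-G$, $\overline{G}(t^-)=P(C\ge t)$. Positivity conditions: there is a truncation time $t_{\max}$ and $\epsilon>0$ such that for all $x$ and all $t\le t_{\max}$ with $f(t\mid x)>0$ (failure density/mass), $\overline{G}(t^-\mid x)\ge\epsilon$; and symmetrically, for all $x$ and all $t\le t_{\max}$ with $g(t\mid x)>0$ (censoring density/mass), $\overline{F}(t\mid x)\ge \epsilon$. A stationary point of a differentiable game is a parameter at which the simultaneous gradient $\xi(\theta)=(\nabla_{\theta_T}\ell_F,\nabla_{\theta_C}\ell_G)$ vanishes. Example of such a game (IPCW Brier score at time $t$): $\ell_F^t=\mathbb{E}\big[\overline{F}_{\theta_T}(t)^2\Delta\mathbf{1}\{U\le t\}/\overline{G}_{\theta_C}(U^-)+F_{\theta_T}(t)^2\mathbf{1}\{U>t\}/\overline{G}_{\theta_C}(t)\big]$ and $\ell_G^t=\mathbb{E}\big[\overline{G}_{\theta_C}(t)^2(1-\Delta)\mathbf{1}\{U\le t\}/\overline{F}_{\theta_T}(U)+G_{\theta_C}(t)^2\mathbf{1}\{U>t\}/\overline{F}_{\theta_T}(t)\big]$; the result applies to single-time games, summed games over several times, and multi-player games with one failure and one censor player per time. *)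

(* Defs.v *)
From HB Require Import structures.
From mathcomp Require Import all_boot all_order all_algebra.
From mathcomp Require Import all_classical all_reals all_analysis.
Set Implicit Arguments. Unset Strict Implicit. Unset Printing Implicit Defensive.
Import Order.TTheory GRing.Theory Num.Theory.
Import numFieldNormedType.Exports.
Local Open Scope ring_scope.

(** Conditional CDFs: x |-> (t |-> P(time <= t | X = x)), features in [Xf]. *)
Definition condcdf (R : realType) (Xf : Type) := Xf -> R -> R.

(** A loss on distributions, [L Q P] = loss of candidate Q when the data are
    generated by P, is proper if it is minimized at the true distribution. *)
Definition proper_loss (R : realType) (Xf : Type) (L : condcdf R Xf -> condcdf R Xf -> R) :=
  forall P Q : condcdf R Xf, L P P <= L Q P.

Definition grad (R : realType) (p : nat) (f : 'rV[R]_p -> R) (x : 'rV[R]_p)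
  : 'rV[R]_p := \row_(i < p) derive f x (delta_mx 0 i).

(* Main.v *)
Require Import Defs.
From HB Require Import structures.
From mathcomp Require Import all_boot all_order all_algebra.
From mathcomp Require Import all_classical all_reals all_analysis.
From mathcomp Require Import lra.
Import Order.TTheory GRing.Theory Num.Theory.
Import numFieldNormedType.Exports.
Local Open Scope classical_set_scope.
Local Open Scope ring_scope.

Lemma dir_min (R : realType) p (f : 'rV[R]_p -> R) (S : set 'rV[R]_p) x v :
  open S -> S x -> (forall y, S y -> f x <= f y) ->
  (forall y, S y -> differentiable f y) -> 'D_v f x = 0.
Proof.
move=> oS Sx xmin fd.
pose g := fun t : R => t *: v + x.
have gc : (g @ (0:R)) --> x.
  have := cvgD (@scalel_continuous _ _ v 0) (cvg_cst x).
  by rewrite scale0r add0r => H; apply: H.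
have nS : \forall t \near (0:R), S (g t).
  by apply: gc; apply: open_nbhs_nbhs; split.
move: nS => /nbhs_ballP [e /= e0 He].
pose h := fun t => f (g t).
have eqd : forall t, (fun k : R => k^-1 *: ((h \o shift t) (k *: 1) - h t))
   = (fun k : R => k^-1 *: ((f \o shift (g t)) (k *: v) - f (g t))).
  move=> t; apply/funext => k /=.
  by rewrite /shift /h /g /= [_%:A]mulr1 scalerDl addrA.
have hd : is_derive (0:R) (1:R) h 0.
  apply: (@derive1_at_min _ h (-e) e 0).
  - lra.
  - move=> t; rewrite in_itv /= => /andP [t1 t2].
    have St : S (g t).
      apply: He; rewrite /ball /= sub0r normrN; apply/ltr_normlP; split; lra.
    rewrite /derivable eqd.
    exact: diff_derivable (fd _ St).
  - rewrite in_itv /=; apply/andP; split; lra.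
  - move=> t; rewrite in_itv /= => /andP [t1 t2].
    rewrite /h /g scale0r add0r; apply: xmin.
    apply: He; rewrite /ball /= sub0r normrN; apply/ltr_normlP; split; lra.
have := @derive_val _ _ _ _ _ _ _ hd.
rewrite /derive eqd.
have -> : g 0 = x by rewrite /g scale0r add0r.
by [].
Qed.

Lemma grad_min (R : realType) p (f : 'rV[R]_p -> R) (S : set 'rV[R]_p) x :
  open S -> S x -> (forall y, S y -> f x <= f y) ->
  (forall y, S y -> differentiable f y) -> grad f x = 0.
Proof.
move=> oS Sx xmin fd; apply/rowP => i; rewrite !mxE.
exact: (@dir_min _ _ _ _ _ _ oS Sx xmin fd).
Qed.

Theorem proposition1 (R : realType) (Xf : Type) (pT pC : nat)
  (ThT : set 'rV[R]_pT) (ThC : set 'rV[R]_pC)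
  (F : 'rV[R]_pT -> condcdf R Xf) (G : 'rV[R]_pC -> condcdf R Xf)
  (Fstar Gstar : condcdf R Xf) (thTstar : 'rV[R]_pT) (thCstar : 'rV[R]_pC)
  (L : condcdf R Xf -> condcdf R Xf -> R)
  (LIT LIC : condcdf R Xf -> condcdf R Xf -> R) :
  open ThT -> open ThC ->
  ThT thTstar -> ThC thCstar ->
  Fstar = F thTstar -> Gstar = G thCstar ->
  proper_loss L ->
  (forall thT, ThT thT -> LIT (F thT) Gstar = L (F thT) Fstar) ->
  (forall thC, ThC thC -> LIC (G thC) Fstar = L (G thC) Gstar) ->
  (forall thT thC, ThT thT -> ThC thC ->
     differentiable (fun t => LIT (F t) (G thC)) thT) ->
  (forall thT thC, ThT thT -> ThC thC ->
     differentiable (fun c => LIC (G c) (F thT)) thC) ->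
  let ellF := fun thT thC => LIT (F thT) (G thC) in
  let ellG := fun thT thC => LIC (G thC) (F thT) in
  grad (fun t => ellF t thCstar) thTstar = 0 /\
  grad (fun c => ellG thTstar c) thCstar = 0.
Proof.
move=> oT oC sT sC eF eG pL hT hC dT dC ellF ellG; split.
- apply: (@grad_min R pT (fun t => ellF t thCstar) ThT thTstar oT sT).
  + move=> y Sy; rewrite /ellF -eG hT // hT // -eF; exact: pL.
  + by move=> y Sy; apply: dT.
- apply: (@grad_min R pC (fun c => ellG thTstar c) ThC thCstar oC sC).
  + move=> y Sy; rewrite /ellG -eF hC // hC // -eG; exact: pL.
  + by move=> y Sy; apply: dC.
Qed.
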